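(* Let $(\Lambda,m_\Lambda)$ be a separated set with multiplicity and finite height, and let $(\Gamma,m_\Gamma)\in W_{\mathbb{Z}}(\Lambda,m_\Lambda)$. Then $D^-(\Gamma,m_\Gamma)\ge D^-(\Lambda,m_\Lambda)$.
   Context: A set with multiplicity is a pair $(\Lambda,m_\Lambda)$, $\Lambda\subseteq\mathbb{R}$, $m_\Lambda:\Lambda\to\mathbb{N}$; height $N=\sup m_\Lambda$; separated means $\inf\{|\lambda-\lambda'|:\lambda\ne\lambda'\}>0$. Let $\Lambda^j=\{\lambda:m_\Lambda(\lambda)\ge j\}$, $j=1,\dots,N$. A sequence of sets $\Lambda_n$ converges weakly to $\Lambda'$ if for every bounded open interval $(a,b)$ and $\varepsilon>0$, for all large $n$: $\Lambda_n\cap(a,b)\subseteq\Lambda'+(-\varepsilon,\varepsilon)$ and $\Lambda'\cap(a,b)\subseteq\Lambda_n+(-\varepsilon,\varepsilon)$. $(\Gamma,m_\Gamma)\in W_{\mathbb{Z}}(\Lambda,m_\Lambda)$ means: there are sets $\Gamma^1,\dots,\Gamma^N$ and a sequence $(k_n)\subseteq\mathbb{Z}$ such that $\Lambda^j+k_n$ converges weakly to $\Gamma^j$ for every $j$, and $\Gamma:=\Gamma^1$, $m_\Gamma(\gamma):=\max\{j:\gamma\in\Gamma^j\}$. $D^-(\Lambda,m_\Lambda)=\liminf_{r\to\infty}\inf_{x\in\mathbb{R}}\frac{1}{2r}\sum_{\lambda\in\Lambda\cap[x-r,x+r]}m_\Lambda(\lambda)$. *)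

(* Defs.v *)
From HB Require Import structures.
From mathcomp Require Import all_boot all_order all_algebra.
From mathcomp Require Import all_classical all_reals ereal esum.
Set Implicit Arguments. Unset Strict Implicit. Unset Printing Implicit Defensive.
Import Order.TTheory GRing.Theory Num.Theory.
Local Open Scope classical_set_scope.
Local Open Scope ring_scope.

Section Defs.
Variable R : realType.

(* A set with multiplicity: Lam : set R, m : R -> nat (only meaningful on Lam);
   multiplicities are positive integers. *)
Definition is_mult_set (Lam : set R) (m : R -> nat) : Prop :=
  forall l, Lam l -> (1 <= m l)%N.

(* N is the height sup_{l in Lam} m l (in nat, sup of empty = 0). *)
Definition is_height (Lam : set R) (m : R -> nat) (N : nat) : Prop :=
  (forall l, Lam l -> (m l <= N)%N) /\
  (forall M : nat, (forall l, Lam l -> (m l <= M)%N) -> (N <= M)%N).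

Definition separated_set (Lam : set R) : Prop :=
  exists delta : R, 0 < delta /\
    forall l l', Lam l -> Lam l' -> l <> l' -> delta <= `|l - l'|.

Definition level (Lam : set R) (m : R -> nat) (j : nat) : set R :=
  [set l | Lam l /\ (j <= m l)%N].

Definition translate (A : set R) (k : int) : set R :=
  [set y | A (y - k%:~R)].

Definition weak_conv (L : nat -> set R) (L' : set R) : Prop :=
  forall a b eps : R, 0 < eps ->
    exists n0 : nat, forall n : nat, (n0 <= n)%N ->
      (forall x, L n x -> a < x < b -> exists y, L' y /\ `|x - y| < eps) /\
      (forall y, L' y -> a < y < b -> exists x, L n x /\ `|x - y| < eps).

Definition in_WZ (Lam : set R) (m : R -> nat) (N : nat)
    (Gam : set R) (mG : R -> nat) : Prop :=
  exists (Gs : nat -> set R) (k : nat -> int),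
    (forall j, (1 <= j <= N)%N ->
        weak_conv (fun n => translate (level Lam m j) (k n)) (Gs j)) /\
    Gam = Gs 1%N /\
    (forall g, Gam g ->
        [/\ (1 <= mG g <= N)%N, Gs (mG g) g &
            forall j, (mG g < j <= N)%N -> ~ Gs j g]).

Definition count (Lam : set R) (m : R -> nat) (x r : R) : \bar R :=
  \esum_(l in [set l | Lam l /\ x - r <= l <= x + r]) ((m l)%:R)%:E.

Definition dens_r (Lam : set R) (m : R -> nat) (r : R) : \bar R :=
  ereal_inf [set (((2 * r)^-1)%:E * count Lam m x r)%E | x in [set: R]].

(* D^-(Lam, m) = liminf_{r -> oo} dens_r r = sup_{R0 > 0} inf_{r >= R0} dens_r r *)
Definition lower_density (Lam : set R) (m : R -> nat) : \bar R :=
  ereal_sup [set ereal_inf [set dens_r Lam m r | r in [set r | R0 <= r]]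
            | R0 in [set R0 : R | 0 < R0]].

End Defs.

(* Main.v *)
Require Import Defs.
From HB Require Import structures.
From mathcomp Require Import all_boot all_order all_algebra.
From mathcomp Require Import all_classical all_reals ereal esum.
From mathcomp Require Import lra zify.
Import Order.TTheory GRing.Theory Num.Theory.
Set Implicit Arguments. Unset Strict Implicit.
Local Open Scope classical_set_scope.
Local Open Scope ring_scope.

Section Helpers.
Variable R : realType.
Implicit Types (x y e d : R).

Lemma absP x e : `|x| < e <-> (- e < x /\ x < e).
Proof. by rewrite ltr_norml; split => [/andP[]|[-> ->]]. Qed.

Lemma absI x e : - e < x -> x < e -> `|x| < e.
Proof. by move=> h1 h2; apply/absP. Qed.

Lemma pos_min a b : 0 < a -> 0 < b -> exists c : R, [/\ 0 < c, c <= a & c <= b].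
Proof.
move=> ha hb; case: (leP a b) => h; first by exists a; split => //.
by exists b; split => //; apply: ltW.
Qed.

Lemma normE x : (`|x| = x /\ 0 <= x) \/ (`|x| = - x /\ x < 0).
Proof.
case: (lerP 0 x) => h; [left; split=> //; exact: ger0_norm|right; split=> //; exact: ltr0_norm].
Qed.

Definition sepd (L : set R) d := forall x y, L x -> L y -> x <> y -> d <= `|x - y|.

Lemma sepd_lt (L : set R) d x y : sepd L d -> L x -> L y -> `|x - y| < d -> x = y.
Proof.
move=> hs hx hy hl; apply: contrapT => hne.
by have := hs _ _ hx hy hne; rewrite leNgt hl.
Qed.

Lemma wc_sep (L : nat -> set R) G d : 0 < d -> (forall n, sepd (L n) d) ->
  weak_conv L G -> sepd G (d / 2).
Proof.
move=> d0 hL hw g1 g2 G1 G2 hne; rewrite leNgt; apply/negP => hlt.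
have hp : 0 < `|g1 - g2| by rewrite normr_gt0 subr_eq0; apply/eqP.
have [n0 hn0] := hw (Num.min g1 g2 - 1) (Num.max g1 g2 + 1) (`|g1 - g2| / 4)
   ltac:(by rewrite divr_gt0).
have [_ h2] := hn0 n0 (leqnn _).
have hin g : (g = g1) \/ (g = g2) -> Num.min g1 g2 - 1 < g < Num.max g1 g2 + 1.
  move=> hg; apply/andP; split.
    apply: (@lt_le_trans _ _ (Num.min g1 g2)); first lra.
    by case: hg => ->; rewrite ge_min lexx ?orbT.
  apply: (@le_lt_trans _ _ (Num.max g1 g2)); last lra.
  by case: hg => ->; rewrite le_max lexx ?orbT.
have [x1 [Lx1 hx1]] := h2 g1 G1 (hin g1 (or_introl erefl)).
have [x2 [Lx2 hx2]] := h2 g2 G2 (hin g2 (or_intror erefl)).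
move/absP: hx1 => [a1 b1]; move/absP: hx2 => [a2 b2].
move/absP: hlt => [c1 c2].
have hx : x1 = x2.
  apply: (sepd_lt (hL n0) Lx1 Lx2); apply: absI;
  case: (normE (g1 - g2)) => -[hn hs]; lra.
subst x2; case: (normE (g1 - g2)) => -[hn hs]; lra.
Qed.

Lemma wc_near (L1 Lj : nat -> set R) G1 Gj : (forall n, Lj n `<=` L1 n) ->
  weak_conv L1 G1 -> weak_conv Lj Gj ->
  forall y e, Gj y -> 0 < e -> exists g, G1 g /\ `|g - y| < 2 * e.
Proof.
move=> hsub h1 hj y e Gy e0.
have [e' [e'0 e'e e'1]] := pos_min e0 (ltr01 : (0:R) < 1).
have [n1 hn1] := h1 (y - 3) (y + 3) e' e'0.
have [nj hnj] := hj (y - 3) (y + 3) e' e'0.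
have [_ hb] := hnj (maxn n1 nj) (leq_maxr _ _).
have [ha _] := hn1 (maxn n1 nj) (leq_maxl _ _).
have [x [Ljx hx]] := hb y Gy ltac:(apply/andP; split; lra).
move/absP: hx => [hx1 hx2].
have [g [Gg hg]] := ha x (hsub _ _ Ljx) ltac:(apply/andP; split; lra).
move/absP: hg => [hg1 hg2].
exists g; split => //; apply: absI; lra.
Qed.

Lemma wc_sub (L1 Lj : nat -> set R) G1 Gj d : 0 < d -> (forall n, Lj n `<=` L1 n) ->
  weak_conv L1 G1 -> weak_conv Lj Gj -> sepd G1 d -> Gj `<=` G1.
Proof.
move=> d0 hsub h1 hj hs y Gy.
have [g1 [G1g1 hg1]] := wc_near hsub h1 hj Gy (ltac:(lra) : 0 < d / 8).
have [<-//|hne] := pselect (g1 = y).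
have hp : 0 < `|g1 - y| by rewrite normr_gt0 subr_eq0; apply/eqP.
have [g [G1g hg]] := wc_near hsub h1 hj Gy (ltac:(lra) : 0 < `|g1 - y| / 4).
have hgg : g <> g1.
  move=> hgg; subst g; lra.
have := hs _ _ G1g G1g1 hgg.
case: (normE (g1 - y)) => -[? ?]; case: (normE (g - y)) => -[? ?];
case: (normE (g - g1)) => -[? ?]; lra.
Qed.

Lemma gap_r (G : set R) d c : 0 < d -> sepd G d ->
  exists e, 0 < e /\ (forall g, G g -> ~ (c < g < c + e)).
Proof.
move=> d0 hs.
have [[g [Gg /andP[h1 h2]]]|hno] := pselect (exists g, G g /\ c < g < c + d).
  exists (g - c); split; first lra.
  move=> g' Gg' /andP[h3 h4].
  have hgg : g' = g by apply: (sepd_lt hs Gg' Gg); apply: absI; lra.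
  subst g'; lra.
exists d; split => // g Gg hg; apply: hno; exists g; split => //.
Qed.

Lemma gap_l (G : set R) d c : 0 < d -> sepd G d ->
  exists e, 0 < e /\ (forall g, G g -> ~ (c - e < g < c)).
Proof.
move=> d0 hs.
have [[g [Gg /andP[h1 h2]]]|hno] := pselect (exists g, G g /\ c - d < g < c).
  exists (c - g); split; first lra.
  move=> g' Gg' /andP[h3 h4].
  have hgg : g' = g by apply: (sepd_lt hs Gg' Gg); apply: absI; lra.
  subst g'; lra.
exists d; split => // g Gg hg; apply: hno; exists g; split => //.
Qed.

Lemma common_n0 (P : nat -> nat -> Prop) N :
  (forall j, (1 <= j <= N)%N -> exists n0, forall n, (n0 <= n)%N -> P j n) ->
  exists n0, forall j, (1 <= j <= N)%N -> forall n, (n0 <= n)%N -> P j n.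
Proof.
elim: N => [|N IH] h; first by exists 0%N => j /andP[h1 h2]; lia.
have [n1 hn1] : exists n0, forall j, (1 <= j <= N)%N -> forall n, (n0 <= n)%N -> P j n.
  by apply: IH => j /andP[h1 h2]; apply: h; apply/andP; split => //; lia.
have [n2 hn2] := h N.+1 ltac:(apply/andP; split => //).
exists (maxn n1 n2) => j /andP[hj1 hj2] n hn.
have [->|hjN] := eqVneq j N.+1; first by apply: hn2; lia.
by apply: hn1; [apply/andP; split; lia|lia].
Qed.

Lemma esum_sub (A B : set R) (w : R -> \bar R) : A `<=` B ->
  (\esum_(i in A) w i <= \esum_(i in B) w i)%E.
Proof.
move=> hAB; apply: ge_ereal_sup => _ [X [finX XA] <-]; apply: esum_ge.
by exists X => //; split => //; apply: subset_trans hAB.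
Qed.

Lemma esum_inj_le (A B : set R) (wA wB : R -> \bar R) (P : R -> R -> Prop) :
  (forall a, A a -> exists b, [/\ B b, (wA a <= wB b)%E & P a b]) ->
  (forall a a' b, A a -> A a' -> P a b -> P a' b -> a = a') ->
  (\esum_(i in A) wA i <= \esum_(i in B) wB i)%E.
Proof.
move=> hex hinj.
have : forall a, exists b, A a -> [/\ B b, (wA a <= wB b)%E & P a b].
  move=> a; have [Aa|nAa] := pselect (A a).
    by have [b hb] := hex a Aa; exists b.
  by exists 0 => /nAa.
move=> /choice [f hf].
apply: (@le_trans _ _ (\esum_(i in A) wB (f i))).
  by apply: le_esum => a Aa; have [] := hf a Aa.
rewrite -esum_image.
  apply: esum_sub => _ [a Aa <-]; by have [] := hf a Aa.
move=> a a' + + he; rewrite !inE => Aa Aa'; apply: (hinj a a' (f a)) => //.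
  by have [] := hf a Aa.
by rewrite he; have [] := hf a' Aa'.
Qed.

Lemma main_count (Lam : set R) (m : R -> nat) (N : nat) (Gam : set R) (mG : R -> nat) :
  is_mult_set Lam m -> separated_set Lam -> is_height Lam m N ->
  in_WZ Lam m N Gam mG ->
  forall x r, exists x', (Defs.count Lam m x' r <= Defs.count Gam mG x r)%E.
Proof.
move=> hm [dl [dl0 hsep]] [hN _] [Gs [k [hconv [hGam hmG]]]] x r.
pose L j n := translate (level Lam m j) (k n).
have sepL : forall j n, sepd (L j n) dl.
  move=> j n y z [Ly _] [Lz _] hyz.
  have -> : y - z = (y - (k n)%:~R) - (z - (k n)%:~R) by rewrite opprB addrA subrK.
  apply: hsep => // he; apply: hyz; move: he => /eqP; rewrite (inj_eq (subIr _)).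
  by move/eqP.
have subL : forall j n, (1 <= j)%N -> L j n `<=` L 1%N n.
  by move=> j n hj y [Ly _]; split => //; apply: hm.
have sepG : sepd Gam (dl / 2).
  move=> g1 g2 G1 G2; have [/andP[h1 h2] _ _] := hmG g1 G1.
  move: G1 G2; rewrite hGam => G1 G2.
  have hw : weak_conv (L 1%N) (Gs 1%N) by apply: hconv; apply/andP; split => //; lia.
  exact: (@wc_sep (L 1%N) (Gs 1%N) dl dl0 (sepL 1%N) hw g1 g2 G1 G2).
have subG : forall j, (1 <= j <= N)%N -> Gs j `<=` Gam.
  move=> j /andP[hj1 hj2]; rewrite hGam.
  apply: (@wc_sub (L 1%N) (L j) _ _ (dl / 2)); first lra.
  - by move=> n; apply: subL.
  - by apply: hconv; apply/andP; split => //; lia.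
  - by apply: hconv; apply/andP; split.
  - by rewrite -hGam.
have [er [er0 her]] := gap_r (x + r) (ltac:(lra) : 0 < dl / 2) sepG.
have [el [el0 hel]] := gap_l (x - r) (ltac:(lra) : 0 < dl / 2) sepG.
have [e1 [e10 e1r e1l]] := pos_min er0 el0.
have [e [e0 ee1 edl]] := pos_min e10 (ltac:(lra) : 0 < dl / 4).
have [n0 hn0] := @common_n0 (fun j n => forall y, L j n y -> x - r - 1 < y < x + r + 1 ->
     exists g, Gs j g /\ `|y - g| < e) N
  ltac:(move=> j hj; have [n0 hn0] := hconv j hj (x - r - 1) (x + r + 1) e e0;
        exists n0 => n hn; by have [] := hn0 n hn).
pose kn : R := (k n0)%:~R.
exists (x - kn); rewrite /Defs.count.
apply: (@esum_inj_le _ _ _ _ (fun p y => `|p + kn - y| < e)).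
  move=> a [La /andP[ha1 ha2]].
  have hma : (1 <= m a <= N)%N by apply/andP; split; [apply: hm|apply: hN].
  have hL : L (m a) n0 (a + kn).
    by rewrite /L /translate /= -/kn addrK; split.
  have [g [Gg hg]] := hn0 (m a) hma n0 (leqnn _) (a + kn) hL
     ltac:(apply/andP; split; lra).
  have GamG := subG _ hma _ Gg.
  exists g; split => //.
  - split => //; move/absP: hg => [hg1 hg2]; apply/andP; split.
      rewrite leNgt; apply/negP => hlt; apply: (hel g GamG); apply/andP; split; lra.
    rewrite leNgt; apply/negP => hlt; apply: (her g GamG); apply/andP; split; lra.
  - rewrite lee_fin ler_nat leqNgt; apply/negP => hlt.
    have [_ _ hno] := hmG g GamG.
    by apply: (hno (m a)) => //; apply/andP; split => //; case/andP: hma.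
move=> a a' b [La _] [La' _] h1 h2.
apply: (sepd_lt hsep La La').
move/absP: h1 => [h1 h1']; move/absP: h2 => [h2 h2']; apply: absI; lra.
Qed.
End Helpers.

Unset Implicit Arguments. Set Strict Implicit.
Theorem lemma3p3 (R : realType) (Lam : set R) (m : R -> nat) (N : nat)
    (Gam : set R) (mG : R -> nat) :
  is_mult_set Lam m -> separated_set Lam -> is_height Lam m N ->
  in_WZ Lam m N Gam mG ->
  (lower_density Gam mG >= lower_density Lam m)%E.
Proof.
move=> hm hs hh hw.
have hc := main_count hm hs hh hw.
have hd : forall r : R, 0 < r -> (dens_r Lam m r <= dens_r Gam mG r)%E.
  move=> r r0; apply: le_ereal_inf_tmp => _ [x _ <-].
  have [x' hx'] := hc x r.
  apply: (@le_trans _ _ (((2*r)^-1)%:E * Defs.count Lam m x' r)%E).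
    by apply: ereal_inf_lbound; exists x'.
  by apply: lee_wpmul2l => //; rewrite lee_fin invr_ge0; lra.
rewrite /lower_density; apply: ge_ereal_sup => _ [R0 R00 <-].
apply: (@le_trans _ _ (ereal_inf [set dens_r Gam mG r | r in [set r | R0 <= r]])).
  apply: le_ereal_inf_tmp => _ [r hr <-].
  apply: (@le_trans _ _ (dens_r Lam m r)).
    by apply: ereal_inf_lbound; exists r.
  by apply: hd; rewrite /= in hr R00; lra.
by apply: ereal_sup_ubound; exists R0.
Qed.
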